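(* Let $(A,\succ,\prec)$ be a Leibniz-dendriform algebra and $r\in A\otimes A$ with $S(r)=0$, $r+\tau(r)$ invariant and $T_{r+\tau(r)}:A^*\to A$ a linear isomorphism (i.e. $(A,\succ,\prec,\Delta_{\succ,r},\Delta_{\prec,r})$ is factorizable). Define $\Phi:A^*\to A\oplus A$ by $\Phi(\zeta)=(T_r(\zeta),-T_{\tau(r)}(\zeta))$. Then $\mathrm{Im}(\Phi)$ is a Leibniz-dendriform subalgebra of the direct product Leibniz-dendriform algebra $A\oplus A$ (componentwise operations), and $\Phi$ is an isomorphism of Leibniz-dendriform algebras from $(A^*,\succ_r,\prec_r)$ onto $\mathrm{Im}(\Phi)$. Moreover, every $x\in A$ has a unique decomposition $x=x_1-x_2$ with $(x_1,x_2)\in\mathrm{Im}(\Phi)$.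
   Context: $\langle\cdot,\cdot\rangle$ is the natural pairing, $I$ the identity, $\tau(a\otimes b)=b\otimes a$. A Leibniz-dendriform algebra is a vector space $A$ with bilinear operations $\succ,\prec$ such that, with $x\circ y:=x\succ y+x\prec y$, for all $x,y,z$: $(x\circ y)\succ z=x\succ(y\succ z)-y\succ(x\succ z)$, $y\prec(x\circ z)+(x\succ y)\prec z=x\succ(y\prec z)$, $x\prec(y\circ z)=(x\prec y)\prec z+y\succ(x\prec z)$. Write $x\odot y:=x\succ y+y\prec x$, $x\star y:=x\circ y+y\circ x$; $L_*(x)y=x*y$, $R_*(x)y=y*x$; $L_\odot:=L_\succ+R_\prec$, $R_\odot:=R_\succ+L_\prec$, $L_\star:=L_\circ+R_\circ$; for $f:A\to\mathrm{End}(A)$, $f^*:A\to\mathrm{End}(A^* )$ is $\langle f^*(x)\xi,v\rangle=-\langle\xi,f(x)v\rangle$. For $r=\sum_ia_i\otimes b_i$: $T_r:A^*\to A$, $\langle T_r(\zeta),\eta\rangle=\langle r,\zeta\otimes\eta\rangle$; $S(r):=\sum_{i,j}\big(a_i\otimes a_j\otimes (b_j\circ b_i)-a_i\otimes (b_i\odot a_j)\otimes b_j-(a_i\succ a_j)\otimes b_i\otimes b_j\big)$. $s\in A\otimes A$ is invariant if for all $x$: $(L_\odot(x)\otimes I-I\otimes R_\circ(x))s=0$ and $(L_\star(x)\otimes I-I\otimes R_\prec(x))\tau(s)=0$. Operations on $A^*$: $\zeta\succ_r\eta=L_\circ^*(T_r(\zeta))\eta-R_\odot^*(T_{\tau(r)}(\eta))\zeta$,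 $\zeta\prec_r\eta=L_\prec^*(T_{\tau(r)}(\zeta))\eta-L_\star^*(T_r(\eta))\zeta$ (the duals of $\Delta_{\succ,r}(x)=(L_\odot(x)\otimes I-I\otimes R_\circ(x))r$, $\Delta_{\prec,r}(x)=(L_\star(x)\otimes I-I\otimes R_\prec(x))\tau(r)$). *)

(* Defs.v *)
(* A Leibniz-dendriform algebra of finite dimension n over a
   field K is modelled on A := 'rV[K]_n (standard basis ev p); the dual A^* is
   also modelled on 'rV[K]_n with the dual basis, pairing <xi, v> = sum_j xi_j v_j.
   Tensors in A (x) A are n x n matrices: s = sum_{p,q} s p q  e_p (x) e_q.
   Tensors in A (x) A (x) A are functions 'I_n -> 'I_n -> 'I_n -> K. *)
From HB Require Import structures.
From mathcomp Require Import all_boot all_order all_algebra.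
Set Implicit Arguments. Unset Strict Implicit. Unset Printing Implicit Defensive.
Import Order.TTheory GRing.Theory Num.Theory.
Local Open Scope ring_scope.

Section LeibnizDendriform.
Variables (K : fieldType) (n : nat).
Local Notation V := 'rV[K]_n.

Definition ev (p : 'I_n) : V := delta_mx 0 p.

Definition bilinear_op (op : V -> V -> V) : Prop :=
  (forall x, linear (op x)) /\ (forall y, linear (fun x => op x y)).

Variables (succ prec : V -> V -> V).

Definition ld_circ (x y : V) : V := succ x y + prec x y.
Definition ld_odot (x y : V) : V := succ x y + prec y x.
Definition ld_star (x y : V) : V := ld_circ x y + ld_circ y x.

Definition is_LD : Prop :=
  bilinear_op succ /\ bilinear_op prec /\
  (forall x y z, succ (ld_circ x y) z = succ x (succ y z) - succ y (succ x z)) /\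
  (forall x y z, prec y (ld_circ x z) + prec (succ x y) z = succ x (prec y z)) /\
  (forall x y z, prec x (ld_circ y z) = prec (prec x y) z + succ y (prec x z)).

Definition tens2 (u v : V) : 'M[K]_n := u^T *m v.
Definition tens3 (u v w : V) : 'I_n -> 'I_n -> 'I_n -> K :=
  fun i j k => u 0 i * v 0 j * w 0 k.

(* S(r), using the decomposition r = sum_{(p,q)} (r p q *: e_p) (x) e_q *)
Definition S_tensor (r : 'M[K]_n) : 'I_n -> 'I_n -> 'I_n -> K :=
  fun i j k =>
  \sum_p \sum_q \sum_s \sum_t
    ( tens3 (r p q *: ev p) (r s t *: ev s) (ld_circ (ev t) (ev q)) i j k
    - tens3 (r p q *: ev p) (ld_odot (ev q) (r s t *: ev s)) (ev t) i j k
    - tens3 (succ (r p q *: ev p) (r s t *: ev s)) (ev q) (ev t) i j k ).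

Definition tapp (f g : V -> V) (s : 'M[K]_n) : 'M[K]_n :=
  \sum_p \sum_q s p q *: tens2 (f (ev p)) (g (ev q)).

Definition is_invariant (s : 'M[K]_n) : Prop :=
  forall x : V,
    tapp (ld_odot x) id s - tapp id (fun y => ld_circ y x) s = 0 /\
    tapp (ld_star x) id s^T - tapp id (fun y => prec y x) s^T = 0.

Definition dpair (xi v : V) : K := \sum_j xi 0 j * v 0 j.

(* T_r : A^* -> A, <T_r zeta, eta> = <r, zeta (x) eta> *)
Definition Tmap (r : 'M[K]_n) (zeta : V) : V := zeta *m r.

(* dual of an endomorphism g of A : <g^* xi, v> = - <xi, g v> *)
Definition dualop (g : V -> V) (xi : V) : V := \row_i (- dpair xi (g (ev i))).

Definition dsucc (r : 'M[K]_n) (zeta eta : V) : V :=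
  dualop (ld_circ (Tmap r zeta)) eta
  - dualop (fun y => ld_odot y (Tmap r^T eta)) zeta.

Definition dprec (r : 'M[K]_n) (zeta eta : V) : V :=
  dualop (prec (Tmap r^T zeta)) eta - dualop (ld_star (Tmap r eta)) zeta.

End LeibnizDendriform.

Definition prodop (T : Type) (op : T -> T -> T) (a b : T * T) : T * T :=
  (op a.1 b.1, op a.2 b.2).

Definition Phi (K : fieldType) (n : nat) (r : 'M[K]_n) (zeta : 'rV[K]_n)
  : 'rV[K]_n * 'rV[K]_n := (Tmap r zeta, - Tmap r^T zeta).

(* Main.v *)
Require Import Defs.
From HB Require Import structures.
From mathcomp Require Import all_boot all_order all_algebra.
From mathcomp Require Import ring.
Import GRing.Theory.
Local Open Scope ring_scope.

Set Implicit Arguments. Unset Strict Implicit.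

Section Basics.
Variables (K : fieldType) (n : nat).
Local Notation V := 'rV[K]_n.
Local Notation ev := (ev K).

Section Lin.
Variable f : V -> V.
Hypothesis hf : forall a u v, f (a *: u + v) = a *: f u + f v.
Lemma lf0 : f 0 = 0.
Proof.
have e := hf 1 0 0; rewrite scaler0 addr0 scale1r in e.
by apply: (@addrI _ (f 0)); rewrite addr0 -e.
Qed.
Lemma lfD u v : f (u + v) = f u + f v.
Proof. by have := hf 1 u v; rewrite !scale1r. Qed.
Lemma lfZ a u : f (a *: u) = a *: f u.
Proof. by rewrite -[a *: u]addr0 hf lf0 addr0. Qed.
Lemma lfN u : f (- u) = - f u.
Proof. by rewrite -scaleN1r lfZ scaleN1r. Qed.
Lemma lfB u v : f (u - v) = f u - f v.
Proof. by rewrite lfD lfN. Qed.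
Lemma lf_sum (I : finType) (c : I -> K) (w : I -> V) :
  f (\sum_i c i *: w i) = \sum_i c i *: f (w i).
Proof.
rewrite (big_morph f lfD lf0); apply: eq_bigr => i _; exact: lfZ.
Qed.
Lemma lf_sumD (I : finType) (w : I -> V) :
  f (\sum_i w i) = \sum_i f (w i).
Proof. exact: (big_morph f lfD lf0). Qed.
End Lin.

Lemma dpairC (a b : V) : dpair a b = dpair b a.
Proof. by apply: eq_bigr => j _; rewrite mulrC. Qed.
Lemma dpairLr xi a (u v : V) : dpair xi (a *: u + v) = a * dpair xi u + dpair xi v.
Proof.
rewrite /dpair mulr_sumr -big_split; apply: eq_bigr => j _; by rewrite !mxE mulrDr mulrCA.
Qed.
Lemma dpairLl xi a (u v : V) : dpair (a *: u + v) xi = a * dpair u xi + dpair v xi.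
Proof. by rewrite dpairC dpairLr (dpairC xi) (dpairC xi). Qed.
Lemma dpair0r (xi : V) : dpair xi 0 = 0.
Proof. by rewrite /dpair big1 // => j _; rewrite mxE mulr0. Qed.
Lemma dpairDr (xi u v : V) : dpair xi (u + v) = dpair xi u + dpair xi v.
Proof. by have := dpairLr xi 1 u v; rewrite scale1r mul1r. Qed.
Lemma dpairZr (xi u : V) a : dpair xi (a *: u) = a * dpair xi u.
Proof. by rewrite -[a *: u]addr0 dpairLr dpair0r addr0. Qed.
Lemma dpairNr (xi u : V) : dpair xi (- u) = - dpair xi u.
Proof. by rewrite -scaleN1r dpairZr mulN1r. Qed.
Lemma dpairBr (xi u v : V) : dpair xi (u - v) = dpair xi u - dpair xi v.
Proof. by rewrite dpairDr dpairNr. Qed.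
Lemma dpair_sumr (xi : V) (I : finType) (c : I -> K) (w : I -> V) :
  dpair xi (\sum_i c i *: w i) = \sum_i c i * dpair xi (w i).
Proof.
rewrite (big_morph (dpair xi) (dpairDr xi) (dpair0r xi)).
by apply: eq_bigr => i _; rewrite dpairZr.
Qed.
Lemma ev_coord (p a : 'I_n) : (ev p) 0 a = (p == a)%:R.
Proof. rewrite /Defs.ev. by rewrite mxE eqxx eq_sym. Qed.
Lemma dpair_ev i (v : V) : dpair (ev i) v = v 0 i.
Proof.
rewrite /dpair (bigD1 i) //= big1 ?addr0; first by rewrite ev_coord eqxx mul1r.
by move=> j hj; rewrite ev_coord eq_sym (negbTE hj) mul0r.
Qed.
Lemma dpair_adj (xi v : V) (M : 'M[K]_n) : dpair xi (v *m M) = dpair (xi *m M^T) v.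
Proof.
have E : forall a b : V, dpair a b = (a *m b^T) 0 0.
  by move=> a b; rewrite mxE; apply: eq_bigr => j _; rewrite mxE.
by rewrite !E trmx_mul mulmxA.
Qed.
Lemma vec_eq (u v : V) : (forall xi, dpair xi u = dpair xi v) -> u = v.
Proof. by move=> h; apply/rowP => j; have := h (ev j); rewrite !dpair_ev. Qed.

Lemma dualopE (g : V -> V) (hg : forall a u v, g (a *: u + v) = a *: g u + g v)
  xi v : dpair v (dualop g xi) = - dpair xi (g v).
Proof.
rewrite dpairC {2}(row_sum_delta v) (lf_sum hg) dpair_sumr -sumrN.
by apply: eq_bigr => i _; rewrite !mxE mulNr mulrC.
Qed.

Lemma ext0 (f : V -> K) (hf : forall a u v, f (a *: u + v) = a * f u + f v) :
  (forall i, f (ev i) = 0) -> forall u, f u = 0.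
Proof.
move=> h u.
have f0 : f 0 = 0.
  have e := hf 1 0 0; rewrite scaler0 addr0 mul1r in e.
  by apply: (@addrI _ (f 0)); rewrite addr0 -e.
rewrite (row_sum_delta u); elim/big_ind: _ => //.
  by move=> x y hx hy; have := hf 1 x y; rewrite scale1r mul1r hx hy addr0.
by move=> i _; have := hf (u 0 i) (ev i) 0; rewrite addr0 f0 h mulr0 addr0.
Qed.

Lemma rowexp (b : 'I_n) (M : 'M[K]_n) : ev b *m M = \sum_p M b p *: ev p.
Proof.
rewrite {1}(row_sum_delta (ev b *m M)); apply: eq_bigr => p _.
by rewrite /ev -rowE mxE.
Qed.
Lemma coord_sum (I : finType) (c : I -> K) (w : I -> V) a :
  (\sum_i c i *: w i) 0 a = \sum_i c i * w i 0 a.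
Proof. by rewrite summxE; apply: eq_bigr => i _; rewrite mxE. Qed.
Lemma coordZ c (p a : 'I_n) : (c *: ev p) 0 a = c * (p == a)%:R.
Proof. by rewrite mxE ev_coord. Qed.
End Basics.

Section Core.
Variables (K : fieldType) (n : nat).
Local Notation V := 'rV[K]_n.
Variables (succ prec : V -> V -> V)
  (B : V -> V -> K) (P : V -> V).
Hypothesis sBl : forall a b c, succ (a - b) c = succ a c - succ b c.
Hypothesis sBr : forall a b c, succ a (b - c) = succ a b - succ a c.
Hypothesis pBl : forall a b c, prec (a - b) c = prec a c - prec b c.
Hypothesis pBr : forall a b c, prec a (b - c) = prec a b - prec a c.
Hypothesis BD : forall a b c, B a (b + c) = B a b + B a c.
Hypothesis BN : forall a b, B a (- b) = - B a b.
Hypothesis BB : forall a b c, B a (b - c) = B a b - B a c.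

Local Notation circ := (ld_circ succ prec).
Local Notation odot := (ld_odot succ prec).
Local Notation star := (ld_star succ prec).

Definition fi1 X Y Z := B Y (odot X Z) - B Z (circ Y X).
Definition fi2 X Y Z := B Y (star X Z) - B Z (prec Y X).
Definition fsr x y z := B z (circ (P y) (P x)) - B y (odot (P x) (z - P z))
  - B x (succ (y - P y) (z - P z)).

Hypothesis HI1 : forall X Y Z, fi1 X Y Z = 0.
Hypothesis HI2 : forall X Y Z, fi2 X Y Z = 0.
Hypothesis HSr : forall x y z, fsr x y z = 0.

Ltac expand := rewrite /fi1 /fi2 /fsr /ld_star /ld_circ /ld_odot;
  rewrite ?(sBl, sBr, pBl, pBr, BB, BD, BN).

Lemma core1 x y z :
  (- B y (circ (P x) (z - P z)) + B x (odot (z - P z) (y - P y)))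
  - B z (succ (P x) (P y)) = 0.
Proof.
transitivity (- fi2 x (P y) z - fi1 y x z - fi1 z x (P y) + fsr z x y - fi2 y (P x) z + fi2 y x z - fi1 x z (P y) + fi1 z (P x) y + fi1 y (P x) z).
  by expand; ring.
by rewrite !HI1 !HI2 !HSr; ring.
Qed.

Lemma core2 x y z :
  - (- B y (circ (P x) (P z)) + B x (odot (P z) (y - P y)))
  - B z (succ (x - P x) (y - P y)) = 0.
Proof.
transitivity (fsr z x y); first by expand; ring.
by rewrite HSr.
Qed.

Lemma core3 x y z :
  (- B y (prec (x - P x) (z - P z)) + B x (star (P y) (z - P z)))
  - B z (prec (P x) (P y)) = 0.
Proof.
transitivity (- fi1 x (P y) z + fi1 x y z + fi2 x (P y) z - fsr y z x - fsr z y x + fi2 (P x) y z - fi1 z (P y) x - fi2 x y z - fi1 (P y) z x - fi1 (P x) y z).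
  by expand; ring.
by rewrite !HI1 !HI2 !HSr; ring.
Qed.

Lemma core4 x y z :
  - (- B y (prec (x - P x) (P z)) + B x (star (P y) (P z)))
  - B z (prec (x - P x) (y - P y)) = 0.
Proof.
transitivity (- fsr y z x - fi2 x z y - fsr z y x - fi1 (P x) z y + fi1 x z y + fi2 (P x) z y).
  by expand; ring.
by rewrite !HI1 !HI2 !HSr; ring.
Qed.
End Core.

Section Ops.
Variables (K : fieldType) (n : nat).
Local Notation V := 'rV[K]_n.
Local Notation ev := (ev K).
Variables (succ prec : V -> V -> V).
Hypothesis sl : forall x a u v, succ x (a *: u + v) = a *: succ x u + succ x v.
Hypothesis sr : forall y a u v, succ (a *: u + v) y = a *: succ u y + succ v y.
Hypothesis pl : forall x a u v, prec x (a *: u + v) = a *: prec x u + prec x v.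
Hypothesis pr : forall y a u v, prec (a *: u + v) y = a *: prec u y + prec v y.
Local Notation circ := (ld_circ succ prec).
Local Notation odot := (ld_odot succ prec).
Local Notation star := (ld_star succ prec).

Lemma circ_r x a u v : circ x (a *: u + v) = a *: circ x u + circ x v.
Proof. by rewrite /ld_circ sl pl scalerDr addrACA. Qed.
Lemma circ_l y a u v : circ (a *: u + v) y = a *: circ u y + circ v y.
Proof. by rewrite /ld_circ sr pr scalerDr addrACA. Qed.
Lemma odot_r x a u v : odot x (a *: u + v) = a *: odot x u + odot x v.
Proof. by rewrite /ld_odot sl pr scalerDr addrACA. Qed.
Lemma odot_l y a u v : odot (a *: u + v) y = a *: odot u y + odot v y.
Proof. by rewrite /ld_odot sr pl scalerDr addrACA. Qed.
Lemma star_r x a u v : star x (a *: u + v) = a *: star x u + star x v.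
Proof. by rewrite /ld_star circ_r circ_l [in RHS]scalerDr addrACA. Qed.
Lemma star_l y a u v : star (a *: u + v) y = a *: star u y + star v y.
Proof. by rewrite /ld_star circ_r circ_l [in RHS]scalerDr addrACA. Qed.

Lemma mulL (u v : V) a (M : 'M[K]_n) : (a *: u + v) *m M = a *: (u *m M) + v *m M.
Proof. by rewrite mulmxDl scalemxAl. Qed.

Lemma sum4B3 (F G H : 'I_n -> 'I_n -> 'I_n -> 'I_n -> K) :
  \sum_p \sum_q \sum_s \sum_t (F p q s t - G p q s t - H p q s t) =
  \sum_p \sum_q \sum_s \sum_t F p q s t - \sum_p \sum_q \sum_s \sum_t G p q s t
  - \sum_p \sum_q \sum_s \sum_t H p q s t.
Proof.
rewrite -!sumrB; apply: eq_bigr => p _; rewrite -!sumrB; apply: eq_bigr => q _.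
rewrite -!sumrB; apply: eq_bigr => s _; by rewrite -!sumrB.
Qed.

Lemma sum_single (F : 'I_n -> K) a : (forall p, p != a -> F p = 0) -> \sum_p F p = F a.
Proof. by move=> h; rewrite (bigD1 a) //= big1 ?addr0 // => p; apply: h. Qed.


Lemma coll13 (F : 'I_n -> 'I_n -> 'I_n -> 'I_n -> K) a b :
  (forall p q s t, (p != a) || (s != b) -> F p q s t = 0) ->
  \sum_p \sum_q \sum_s \sum_t F p q s t = \sum_q \sum_t F a q b t.
Proof.
move=> h; rewrite [LHS](sum_single (a:=a)); last first.
  move=> p hp; apply: big1 => q _; apply: big1 => s _; apply: big1 => t _.
  by apply: h; rewrite hp.
apply: eq_bigr => q _; rewrite [LHS](sum_single (a:=b)) // => s hs.
by apply: big1 => t _; apply: h; rewrite hs orbT.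
Qed.
Lemma coll14 (F : 'I_n -> 'I_n -> 'I_n -> 'I_n -> K) a c :
  (forall p q s t, (p != a) || (t != c) -> F p q s t = 0) ->
  \sum_p \sum_q \sum_s \sum_t F p q s t = \sum_q \sum_s F a q s c.
Proof.
move=> h; rewrite [LHS](sum_single (a:=a)); last first.
  move=> p hp; apply: big1 => q _; apply: big1 => s _; apply: big1 => t _.
  by apply: h; rewrite hp.
apply: eq_bigr => q _; apply: eq_bigr => s _; rewrite [LHS](sum_single (a:=c)) // => t ht.
by apply: h; rewrite ht orbT.
Qed.
Lemma coll24 (F : 'I_n -> 'I_n -> 'I_n -> 'I_n -> K) b c :
  (forall p q s t, (q != b) || (t != c) -> F p q s t = 0) ->
  \sum_p \sum_q \sum_s \sum_t F p q s t = \sum_p \sum_s F p b s c.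
Proof.
move=> h; apply: eq_bigr => p _; rewrite [LHS](sum_single (a:=b)); last first.
  move=> q hq; apply: big1 => s _; apply: big1 => t _.
  by apply: h; rewrite hq.
apply: eq_bigr => s _; rewrite [LHS](sum_single (a:=c)) // => t ht.
by apply: h; rewrite ht orbT.
Qed.

Lemma circ_suml (c : 'I_n -> K) (w : 'I_n -> V) y :
  circ (\sum_i c i *: w i) y = \sum_i c i *: circ (w i) y.
Proof. exact: (@lf_sum _ _ (fun u => circ u y) (circ_l y)). Qed.
Lemma circ_sumr (c : 'I_n -> K) (w : 'I_n -> V) x :
  circ x (\sum_i c i *: w i) = \sum_i c i *: circ x (w i).
Proof. exact: (@lf_sum _ _ (circ x) (circ_r x)). Qed.
Lemma odot_suml (c : 'I_n -> K) (w : 'I_n -> V) y :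
  odot (\sum_i c i *: w i) y = \sum_i c i *: odot (w i) y.
Proof. exact: (@lf_sum _ _ (fun u => odot u y) (odot_l y)). Qed.
Lemma odot_sumr (c : 'I_n -> K) (w : 'I_n -> V) x :
  odot x (\sum_i c i *: w i) = \sum_i c i *: odot x (w i).
Proof. exact: (@lf_sum _ _ (odot x) (odot_r x)). Qed.
Lemma star_sumr (c : 'I_n -> K) (w : 'I_n -> V) x :
  star x (\sum_i c i *: w i) = \sum_i c i *: star x (w i).
Proof. exact: (@lf_sum _ _ (star x) (star_r x)). Qed.
Lemma succ_suml (c : 'I_n -> K) (w : 'I_n -> V) y :
  succ (\sum_i c i *: w i) y = \sum_i c i *: succ (w i) y.
Proof. exact: (@lf_sum _ _ (fun u => succ u y) (sr y)). Qed.
Lemma succ_sumr (c : 'I_n -> K) (w : 'I_n -> V) x :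
  succ x (\sum_i c i *: w i) = \sum_i c i *: succ x (w i).
Proof. exact: (@lf_sum _ _ (succ x) (sl x)). Qed.
Lemma prec_suml (c : 'I_n -> K) (w : 'I_n -> V) y :
  prec (\sum_i c i *: w i) y = \sum_i c i *: prec (w i) y.
Proof. exact: (@lf_sum _ _ (fun u => prec u y) (pr y)). Qed.

Lemma odot_sumDr (w : 'I_n -> V) x : odot x (\sum_i w i) = \sum_i odot x (w i).
Proof. exact: (@lf_sumD _ _ (odot x) (odot_r x)). Qed.
Lemma succ_sumDl (w : 'I_n -> V) y : succ (\sum_i w i) y = \sum_i succ (w i) y.
Proof. exact: (@lf_sumD _ _ (fun u => succ u y) (sr y)). Qed.
Lemma succ_sumDr (w : 'I_n -> V) x : succ x (\sum_i w i) = \sum_i succ x (w i).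
Proof. exact: (@lf_sumD _ _ (succ x) (sl x)). Qed.

Section S.
Variable r : 'M[K]_n.
Definition Dt (z e x : V) :=
  dpair x (circ (e *m r) (z *m r)) - dpair e (odot (z *m r) (x *m r^T))
  - dpair z (succ (e *m r^T) (x *m r^T)).

Lemma Dt_basis a b c : Dt (ev a) (ev b) (ev c) = S_tensor succ prec r a b c.
Proof.
rewrite /Dt /S_tensor sum4B3 !dpair_ev.
congr (_ - _ - _).
- rewrite !rowexp circ_suml.
  under eq_bigr => t _ do rewrite circ_sumr.
  rewrite coord_sum; under eq_bigr => t _ do rewrite coord_sum.
  rewrite (coll13 (a:=a) (b:=b)); last first.
    by move=> p q s t; rewrite /tens3 !coordZ; case/orP => /negbTE -> /=;
      rewrite !(mulr0, mul0r).
  rewrite exchange_big; apply: eq_bigr => t _; rewrite mulr_sumr.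
  by apply: eq_bigr => q _; rewrite /tens3 !coordZ !eqxx /=; ring.
- have -> : ev c *m r^T = \sum_p r p c *: ev p.
    by rewrite rowexp; apply: eq_bigr => p _; rewrite mxE.
  rewrite rowexp odot_suml.
  under eq_bigr => q _ do rewrite odot_sumDr.
  rewrite coord_sum; under eq_bigr => q _ do rewrite summxE.
  rewrite (coll14 (a:=a) (c:=c)); last first.
    by move=> p q s t; rewrite /tens3 !coordZ ev_coord; case/orP => /negbTE -> /=;
      rewrite !(mulr0, mul0r).
  apply: eq_bigr => q _; rewrite mulr_sumr; apply: eq_bigr => s _.
  by rewrite /tens3 !coordZ ev_coord !eqxx /=; ring.
- have E : forall d, ev d *m r^T = \sum_p r p d *: ev p.
    by move=> d; rewrite rowexp; apply: eq_bigr => p _; rewrite mxE.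
  rewrite !E succ_sumDl.
  under eq_bigr => p _ do rewrite succ_sumDr.
  rewrite summxE; under eq_bigr => p _ do rewrite summxE.
  rewrite (coll24 (b:=b) (c:=c)); last first.
    by move=> p q s t; rewrite /tens3 !ev_coord; case/orP => /negbTE -> /=;
      rewrite !(mulr0, mul0r).
  apply: eq_bigr => p _; apply: eq_bigr => s _.
  by rewrite /tens3 !ev_coord !eqxx /=; ring.
Qed.
Lemma Dt_lz e x a u v : Dt (a *: u + v) e x = a * Dt u e x + Dt v e x.
Proof. rewrite /Dt !mulL circ_r odot_l !dpairLr !dpairLl; ring. Qed.
Lemma Dt_le z x a u v : Dt z (a *: u + v) x = a * Dt z u x + Dt z v x.
Proof. rewrite /Dt !mulL circ_l sr !dpairLl !dpairLr; ring. Qed.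
Lemma Dt_lx z e a u v : Dt z e (a *: u + v) = a * Dt z e u + Dt z e v.
Proof. rewrite /Dt !mulL odot_r sl dpairLl !dpairLr; ring. Qed.

Lemma Dt0 (hS : forall i j k, S_tensor succ prec r i j k = 0) z e x : Dt z e x = 0.
Proof.
have h3 : forall a b x, Dt (ev a) (ev b) x = 0.
  move=> a b; apply: (@ext0 K n (fun x => Dt (ev a) (ev b) x)).
    by move=> *; apply: Dt_lx.
  by move=> c; rewrite Dt_basis hS.
have h2 : forall a e x, Dt (ev a) e x = 0.
  move=> a e' x'; apply: (@ext0 K n (fun e => Dt (ev a) e x')) => //.
  by move=> *; apply: Dt_le.
apply: (@ext0 K n (fun z => Dt z e x)) => //.
by move=> *; apply: Dt_lz.
Qed.
End S.

Lemma tappE (f g : V -> V) (M : 'M[K]_n) a b :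
  tapp f g M a b = \sum_p \sum_q M p q * ((f (ev p)) 0 a * (g (ev q)) 0 b).
Proof.
rewrite /tapp summxE; apply: eq_bigr => p _; rewrite summxE; apply: eq_bigr => q _.
by rewrite mxE /tens2 mxE big_ord1 !mxE.
Qed.

Section Inv.
Variable s : 'M[K]_n.
Hypothesis hs : s^T = s.
Lemma hsym i j : s i j = s j i.
Proof. by rewrite -{1}hs mxE. Qed.

Definition Iv1 z e X := dpair z (odot X (e *m s)) - dpair e (circ (z *m s) X).
Definition Iv2 z e X := dpair z (star X (e *m s)) - dpair e (prec (z *m s) X).

Lemma Iv1_basis X a b :
  Iv1 (ev a) (ev b) X = (tapp (odot X) id s - tapp id (fun y => circ y X) s) a b.
Proof.
rewrite /Iv1 !dpair_ev !rowexp odot_sumr circ_suml !coord_sum !mxE !tappE.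
congr (_ - _).
  apply: eq_bigr => p _; rewrite [RHS](sum_single (a:=b)).
    by rewrite ev_coord eqxx mulr1 hsym.
  by move=> q /negbTE hq; rewrite ev_coord hq mulr0 mulr0.
rewrite [RHS](sum_single (a:=a)).
  by apply: eq_bigr => q _; rewrite ev_coord eqxx mul1r.
by move=> p /negbTE hp; apply: big1 => q _; rewrite ev_coord hp mul0r mulr0.
Qed.

Lemma Iv2_basis X a b :
  Iv2 (ev a) (ev b) X = (tapp (star X) id s^T - tapp id (fun y => prec y X) s^T) a b.
Proof.
rewrite hs /Iv2 !dpair_ev !rowexp star_sumr prec_suml !coord_sum !mxE !tappE.
congr (_ - _).
  apply: eq_bigr => p _; rewrite [RHS](sum_single (a:=b)).
    by rewrite ev_coord eqxx mulr1 hsym.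
  by move=> q /negbTE hq; rewrite ev_coord hq mulr0 mulr0.
rewrite [RHS](sum_single (a:=a)).
  by apply: eq_bigr => q _; rewrite ev_coord eqxx mul1r.
by move=> p /negbTE hp; apply: big1 => q _; rewrite ev_coord hp mul0r mulr0.
Qed.

Lemma Iv1_lz e X a u v : Iv1 (a *: u + v) e X = a * Iv1 u e X + Iv1 v e X.
Proof. rewrite /Iv1 !mulL circ_l !dpairLr !dpairLl; ring. Qed.
Lemma Iv1_le z X a u v : Iv1 z (a *: u + v) X = a * Iv1 z u X + Iv1 z v X.
Proof. rewrite /Iv1 !mulL odot_r !dpairLr !dpairLl; ring. Qed.
Lemma Iv2_lz e X a u v : Iv2 (a *: u + v) e X = a * Iv2 u e X + Iv2 v e X.
Proof. rewrite /Iv2 !mulL pr !dpairLr !dpairLl; ring. Qed.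
Lemma Iv2_le z X a u v : Iv2 z (a *: u + v) X = a * Iv2 z u X + Iv2 z v X.
Proof. rewrite /Iv2 !mulL star_r !dpairLr !dpairLl; ring. Qed.

Lemma Iv0 (hI : is_invariant succ prec s) z e X : Iv1 z e X = 0 /\ Iv2 z e X = 0.
Proof.
have b1 : forall a b, Iv1 (ev a) (ev b) X = 0.
  by move=> a b; rewrite Iv1_basis (proj1 (hI X)) mxE.
have b2 : forall a b, Iv2 (ev a) (ev b) X = 0.
  by move=> a b; rewrite Iv2_basis (proj2 (hI X)) mxE.
split.
  apply: (@ext0 K n (fun z => Iv1 z e X)); first by move=> *; apply: Iv1_lz.
  move=> a; apply: (@ext0 K n (fun e => Iv1 (ev a) e X)) => //.
  by move=> *; apply: Iv1_le.
apply: (@ext0 K n (fun z => Iv2 z e X)); first by move=> *; apply: Iv2_lz.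
move=> a; apply: (@ext0 K n (fun e => Iv2 (ev a) e X)) => //.
by move=> *; apply: Iv2_le.
Qed.
End Inv.
End Ops.

Section Main.
Variables (K : fieldType) (n : nat).
Local Notation V := 'rV[K]_n.
Variables (succ prec : V -> V -> V).
Hypothesis sl : forall x a u v, succ x (a *: u + v) = a *: succ x u + succ x v.
Hypothesis sr : forall y a u v, succ (a *: u + v) y = a *: succ u y + succ v y.
Hypothesis pl : forall x a u v, prec x (a *: u + v) = a *: prec x u + prec x v.
Hypothesis pr : forall y a u v, prec (a *: u + v) y = a *: prec u y + prec v y.
Local Notation circ := (ld_circ succ prec).
Local Notation odot := (ld_odot succ prec).
Local Notation star := (ld_star succ prec).
Variable r : 'M[K]_n.
Hypothesis hS : forall i j k, S_tensor succ prec r i j k = 0.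
Hypothesis hI : is_invariant succ prec (r + r^T).
Variable g : V -> V.
Hypothesis gK : forall z, g (z *m (r + r^T)) = z.
Hypothesis Kg : forall a, g a *m (r + r^T) = a.

Lemma Qlem a : g a *m r^T = a - g a *m r.
Proof. by rewrite -{2}(Kg a) mulmxDr addrAC subrr add0r. Qed.

Let Bf := fun a b => dpair (g a) b.
Let Pf := fun a => g a *m r.

Let hsBl : forall a b c, succ (a - b) c = succ a c - succ b c.
Proof. by move=> a b c; apply: (@lfB K n (fun x => succ x c) (sr c)). Qed.
Let hsBr : forall a b c, succ a (b - c) = succ a b - succ a c.
Proof. by move=> a b c; apply: (@lfB K n (succ a) (sl a)). Qed.
Let hpBl : forall a b c, prec (a - b) c = prec a c - prec b c.
Proof. by move=> a b c; apply: (@lfB K n (fun x => prec x c) (pr c)). Qed.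
Let hpBr : forall a b c, prec a (b - c) = prec a b - prec a c.
Proof. by move=> a b c; apply: (@lfB K n (prec a) (pl a)). Qed.
Let hBD : forall a b c, Bf a (b + c) = Bf a b + Bf a c.
Proof. by move=> a b c; apply: dpairDr. Qed.
Let hBN : forall a b, Bf a (- b) = - Bf a b.
Proof. by move=> a b; apply: dpairNr. Qed.

Lemma hs : (r + r^T)^T = r + r^T.
Proof. by rewrite raddfD /= trmxK addrC. Qed.

Let hI1 : forall X Y Z, @fi1 K n succ prec Bf X Y Z = 0.
Proof.
move=> X Y Z; have := proj1 (Iv0 sl sr pl pr hs hI (g Y) (g Z) X).
by rewrite /Iv1 !Kg.
Qed.
Let hI2 : forall X Y Z, @fi2 K n succ prec Bf X Y Z = 0.
Proof.
move=> X Y Z; have := proj2 (Iv0 sl sr pl pr hs hI (g Y) (g Z) X).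
by rewrite /Iv2 !Kg.
Qed.
Let hSr : forall x y z, @fsr K n succ prec Bf Pf x y z = 0.
Proof.
move=> x y z; have := Dt0 sl sr pl pr hS (g x) (g y) (g z).
by rewrite /Dt !Qlem.
Qed.

Lemma H1 z1 z2 : Tmap r (dsucc succ prec r z1 z2) = succ (Tmap r z1) (Tmap r z2).
Proof.
apply: vec_eq => xi; rewrite -(gK z1) -(gK z2) -(gK xi).
move: (z1 *m _) (z2 *m _) (xi *m _) => x y z.
rewrite /Tmap dpair_adj Qlem /dsucc /Tmap dpairBr (dualopE (circ_r sl pl _))
  (dualopE (odot_l sr pl _)) Qlem.
have C := @core1 K n succ prec Bf Pf hsBl hsBr hpBl hpBr hBD hBN hI1 hI2 hSr x y z.
rewrite /Bf /Pf in C.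
apply/eqP; rewrite -subr_eq0; apply/eqP; apply: (etrans _ C); ring.
Qed.

Let sNl a b : succ (- a) b = - succ a b.
Proof. exact: (@lfN K n (fun x => succ x b) (sr b)). Qed.
Let sNr a b : succ a (- b) = - succ a b.
Proof. exact: (@lfN K n (succ a) (sl a)). Qed.
Let pNl a b : prec (- a) b = - prec a b.
Proof. exact: (@lfN K n (fun x => prec x b) (pr b)). Qed.
Let pNr a b : prec a (- b) = - prec a b.
Proof. exact: (@lfN K n (prec a) (pl a)). Qed.

Lemma H2 z1 z2 :
  - Tmap r^T (dsucc succ prec r z1 z2) = succ (- Tmap r^T z1) (- Tmap r^T z2).
Proof.
apply: vec_eq => xi; rewrite -(gK z1) -(gK z2) -(gK xi).
move: (z1 *m _) (z2 *m _) (xi *m _) => x y z.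
rewrite sNl sNr opprK /Tmap dpairNr dpair_adj trmxK /dsucc /Tmap dpairBr
  (dualopE (circ_r sl pl _)) (dualopE (odot_l sr pl _)) !Qlem.
have C := @core2 K n succ prec Bf Pf hsBl hsBr hpBl hBD hBN hSr x y z.
rewrite /Bf /Pf in C.
apply/eqP; rewrite -subr_eq0; apply/eqP; apply: (etrans _ C); ring.
Qed.

Lemma H3 z1 z2 : Tmap r (dprec succ prec r z1 z2) = prec (Tmap r z1) (Tmap r z2).
Proof.
apply: vec_eq => xi; rewrite -(gK z1) -(gK z2) -(gK xi).
move: (z1 *m _) (z2 *m _) (xi *m _) => x y z.
rewrite /Tmap dpair_adj Qlem /dprec /Tmap dpairBr (dualopE (pl _))
  (dualopE (star_r sl sr pl pr _)) !Qlem.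
have C := @core3 K n succ prec Bf Pf hsBl hsBr hpBl hpBr hBD hBN hI1 hI2 hSr x y z.
rewrite /Bf /Pf in C.
apply/eqP; rewrite -subr_eq0; apply/eqP; apply: (etrans _ C); ring.
Qed.

Lemma H4 z1 z2 :
  - Tmap r^T (dprec succ prec r z1 z2) = prec (- Tmap r^T z1) (- Tmap r^T z2).
Proof.
apply: vec_eq => xi; rewrite -(gK z1) -(gK z2) -(gK xi).
move: (z1 *m _) (z2 *m _) (xi *m _) => x y z.
rewrite pNl pNr opprK /Tmap dpairNr dpair_adj trmxK /dprec /Tmap dpairBr
  (dualopE (pl _)) (dualopE (star_r sl sr pl pr _)) !Qlem.
have C := @core4 K n succ prec Bf Pf hsBl hsBr hpBl hpBr hBD hBN hI1 hI2 hSr x y z.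
rewrite /Bf /Pf in C.
apply/eqP; rewrite -subr_eq0; apply/eqP; apply: (etrans _ C); ring.
Qed.
End Main.

Unset Implicit Arguments. Set Strict Implicit.

Theorem mainTheorem10 (K : fieldType) (n : nat)
  (succ prec : 'rV[K]_n -> 'rV[K]_n -> 'rV[K]_n) (r : 'M[K]_n) :
  is_LD succ prec ->
  (forall i j k, S_tensor succ prec r i j k = 0) ->
  is_invariant succ prec (r + r^T) ->
  bijective (Tmap (r + r^T)) ->
  (* Im(Phi) is a Leibniz-dendriform subalgebra of A (+) A *)
  ((exists z, Phi r z = (0, 0)) /\
   (forall (a : K) zeta eta, exists th,
      Phi r th = (a *: (Phi r zeta).1 + (Phi r eta).1,
                  a *: (Phi r zeta).2 + (Phi r eta).2)) /\
   (forall zeta eta, exists th,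
      prodop succ (Phi r zeta) (Phi r eta) = Phi r th) /\
   (forall zeta eta, exists th,
      prodop prec (Phi r zeta) (Phi r eta) = Phi r th)) /\
  (* Phi is an isomorphism (A^*, succ_r, prec_r) -> Im(Phi) *)
  ((forall (a : K) zeta eta,
      Phi r (a *: zeta + eta) = (a *: (Phi r zeta).1 + (Phi r eta).1,
                                 a *: (Phi r zeta).2 + (Phi r eta).2)) /\
   injective (Phi r) /\
   (forall zeta eta,
      Phi r (dsucc succ prec r zeta eta) = prodop succ (Phi r zeta) (Phi r eta)) /\
   (forall zeta eta,
      Phi r (dprec succ prec r zeta eta) = prodop prec (Phi r zeta) (Phi r eta))) /\
  (* unique decomposition x = x1 - x2 with (x1, x2) in Im(Phi) *)
  (forall x : 'rV[K]_n, exists! p : 'rV[K]_n * 'rV[K]_n,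
      (exists zeta, p = Phi r zeta) /\ x = p.1 - p.2).
Proof.
move=> LD hS hI hB.
case: LD => [[sl0 sr0] [[pl0 pr0] _]].
have sl : forall x a u v, succ x (a *: u + v) = a *: succ x u + succ x v.
  by move=> x a u v; apply: sl0.
have sr : forall y a u v, succ (a *: u + v) y = a *: succ u y + succ v y.
  by move=> y a u v; apply: (sr0 y).
have pl : forall x a u v, prec x (a *: u + v) = a *: prec x u + prec x v.
  by move=> x a u v; apply: pl0.
have pr : forall y a u v, prec (a *: u + v) y = a *: prec u y + prec v y.
  by move=> y a u v; apply: (pr0 y).
case: hB => g gK0 Kg0.
have gK : forall z, g (z *m (r + r^T)) = z by exact: gK0.
have Kg : forall a, g a *m (r + r^T) = a by exact: Kg0.
have Lin : forall (a : K) zeta eta,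
    Phi r (a *: zeta + eta) = (a *: (Phi r zeta).1 + (Phi r eta).1,
                               a *: (Phi r zeta).2 + (Phi r eta).2).
  by move=> a z1 z2; rewrite /Phi /Tmap /= !mulmxDl -!scalemxAl opprD scalerN.
have Hs : forall zeta eta,
    Phi r (dsucc succ prec r zeta eta) = prodop succ (Phi r zeta) (Phi r eta).
  move=> z1 z2; rewrite /Phi /prodop /=; congr (_, _).
    exact: (H1 sl sr pl pr hS hI gK Kg).
  exact: (H2 sl sr pl pr hS gK Kg).
have Hp : forall zeta eta,
    Phi r (dprec succ prec r zeta eta) = prodop prec (Phi r zeta) (Phi r eta).
  move=> z1 z2; rewrite /Phi /prodop /=; congr (_, _).
    exact: (H3 sl sr pl pr hS hI gK Kg).
  exact: (H4 sl sr pl pr hS hI gK Kg).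
have Inj : injective (Phi r).
  move=> z1 z2; rewrite /Phi /Tmap => -[] h1 /eqP; rewrite eqr_opp => /eqP h2.
  by rewrite -(gK z1) -(gK z2) !mulmxDr h1 h2.
split; [|split; first by split].
  split; first by exists 0; rewrite /Phi /Tmap !mul0mx oppr0.
  split; first by move=> a z1 z2; exists (a *: z1 + z2).
  split; first by move=> z1 z2; exists (dsucc succ prec r z1 z2).
  by move=> z1 z2; exists (dprec succ prec r z1 z2).
move=> x; exists (Phi r (g x)); split.
  split; first by exists (g x).
  by rewrite /Phi /Tmap /= opprK -mulmxDr Kg.
move=> p [[z ->] ->]; congr (Phi r _).
by rewrite /Phi /Tmap /= opprK -mulmxDr gK.
Qed.
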